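(* Let $(\mathcal{X},\rho)$ be a metric space, let $(x_1,y_1),\dots,(x_n,y_n)\in\mathcal{X}\times\{-1,1\}$, and let $L>0$. Define $k(L)$ as the minimum, over all $f:\mathcal{X}\to\mathbb{R}$ with Lipschitz constant at most $L$, of $|\{i\in[n]: y_if(x_i)<1\}|$. Let $G_L$ be the bipartite graph with vertex set $[n]$, parts $\{i:y_i=1\}$ and $\{i:y_i=-1\}$, and an edge $\{i,j\}$ whenever $y_i=1$, $y_j=-1$ and $\rho(x_i,x_j)<2/L$. Then $k(L)$ equals the size of a minimum vertex cover of $G_L$ (equivalently, by König's theorem, the size of a maximum matching of $G_L$).
   Context: The Lipschitz constant of $f$ is the smallest $L\ge0$ with $|f(x)-f(x')|\le L\rho(x,x')$ for all $x,x'$. A vertex cover of a graph is a set of vertices meeting every edge. *)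

(* Defs.v *)
From Stdlib Require Import Reals List.
Import ListNotations.
Open Scope R_scope.

Definition is_metric {X : Type} (rho : X -> X -> R) : Prop :=
  (forall x y, 0 <= rho x y) /\
  (forall x y, rho x y = 0 <-> x = y) /\
  (forall x y, rho x y = rho y x) /\
  (forall x y z, rho x z <= rho x y + rho y z).

Definition lipschitz_le {X : Type} (rho : X -> X -> R) (L : R) (f : X -> R) : Prop :=
  forall x x', Rabs (f x - f x') <= L * rho x x'.

(* |{ i in [n] : y_i f(x_i) < 1 }|, indices 0..n-1 *)
Definition margin_errors {X : Type} (n : nat) (x : nat -> X) (y : nat -> R)
  (f : X -> R) : nat :=
  length (filter (fun i => if Rlt_dec (y i * f (x i)) 1 then true else false)
                 (seq 0 n)).

Definition GL_edge {X : Type} (rho : X -> X -> R) (L : R) (x : nat -> X)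
  (y : nat -> R) (i j : nat) : Prop :=
  y i = 1 /\ y j = -1 /\ rho (x i) (x j) < 2 / L.

Definition is_vertex_cover {X : Type} (rho : X -> X -> R) (L : R) (n : nat)
  (x : nat -> X) (y : nat -> R) (C : list nat) : Prop :=
  NoDup C /\ (forall i, In i C -> (i < n)%nat) /\
  (forall i j, (i < n)%nat -> (j < n)%nat -> GL_edge rho L x y i j ->
     In i C \/ In j C).

Definition is_min_nat (P : nat -> Prop) (m : nat) : Prop :=
  P m /\ forall k, P k -> (m <= k)%nat.

(* Main.v *)
Require Import Defs.
From Stdlib Require Import Reals List Lra Lia Classical.
Import ListNotations.
Open Scope R_scope.

Lemma min_exists (P : nat -> Prop) k : P k -> exists m, is_min_nat P m.
Proof.
  revert P. induction k as [k IH] using (well_founded_induction Wf_nat.lt_wf).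
  intros P Hk.
  destruct (classic (exists j, (j < k)%nat /\ P j)) as [[j [Hj Pj]]|Hno].
  - exact (IH j Hj P Pj).
  - exists k; split; auto. intros j Pj.
    destruct (Nat.le_gt_cases k j); auto. exfalso; apply Hno; eauto.
Qed.

Lemma rmax_lip a b c d K : Rabs (a - c) <= K -> Rabs (b - d) <= K ->
  Rabs (Rmax a b - Rmax c d) <= K.
Proof.
  unfold Rmax, Rabs; repeat destruct Rle_dec; repeat destruct Rcase_abs; lra.
Qed.

Definition F {X} (rho : X -> X -> R) L (x : nat -> X) (l : list nat) (z : X) : R :=
  fold_right (fun p acc => Rmax (1 - L * rho z (x p)) acc) (-1) l.

Lemma F_lip {X} (rho : X -> X -> R) L x l : is_metric rho -> 0 < L ->
  lipschitz_le rho L (F rho L x l).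
Proof.
  intros [H0 [H1 [H2 H3]]] HL z z'. induction l as [|p l IH]; simpl.
  - replace (-1 - -1) with 0 by ring. rewrite Rabs_R0.
    apply Rmult_le_pos; [lra|apply H0].
  - apply rmax_lip; auto.
    pose proof (H3 z z' (x p)). pose proof (H3 z' z (x p)). rewrite (H2 z' z) in *.
    assert (Rabs (rho z (x p) - rho z' (x p)) <= rho z z')
      by (unfold Rabs; destruct Rcase_abs; lra).
    replace (1 - L * rho z (x p) - (1 - L * rho z' (x p)))
      with (L * (rho z' (x p) - rho z (x p))) by ring.
    rewrite Rabs_mult, Rabs_pos_eq by lra.
    apply Rmult_le_compat_l; [lra|]. rewrite Rabs_minus_sym; auto.
Qed.

Lemma F_ge {X} (rho : X -> X -> R) L x l p : is_metric rho -> In p l ->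
  1 <= F rho L x l (x p).
Proof.
  intros [H0 [H1 _]] Hin. induction l as [|q l IH]; simpl in *; [tauto|].
  destruct Hin as [<-|Hin].
  - rewrite (proj2 (H1 _ _) eq_refl). eapply Rle_trans; [|apply Rmax_l]. lra.
  - eapply Rle_trans; [apply IH; auto|apply Rmax_r].
Qed.

Lemma F_le {X} (rho : X -> X -> R) L x l z :
  (forall p, In p l -> 2 <= L * rho z (x p)) -> F rho L x l z <= -1.
Proof.
  induction l as [|q l IH]; simpl; intros H; [lra|].
  apply Rmax_lub; [specialize (H q (or_introl eq_refl)); lra|].
  apply IH; auto.
Qed.

Theorem mainTheorem7 (X : Type) (rho : X -> X -> R) (Hrho : is_metric rho)
  (n : nat) (x : nat -> X) (y : nat -> R)
  (Hy : forall i, (i < n)%nat -> y i = 1 \/ y i = -1)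
  (L : R) (HL : 0 < L) :
  exists m : nat,
    is_min_nat (fun k => exists f : X -> R,
                   lipschitz_le rho L f /\ margin_errors n x y f = k) m /\
    is_min_nat (fun k => exists C : list nat,
                   is_vertex_cover rho L n x y C /\ length C = k) m.
Proof.
  set (PC := fun k => exists C : list nat,
                   is_vertex_cover rho L n x y C /\ length C = k).
  assert (Herr : forall f, lipschitz_le rho L f -> PC (margin_errors n x y f)).
  { intros f Hf. unfold margin_errors.
    eexists; split; [|reflexivity]. split; [|split].
    - apply NoDup_filter, seq_NoDup.
    - intros i Hi. apply filter_In in Hi as [Hi _]. apply in_seq in Hi. lia.
    - intros i j Hi Hj [Hyi [Hyj Hr]].
      destruct (Rlt_dec (y i * f (x i)) 1) as [Ei|Ei].
      { left. apply filter_In; split; [apply in_seq; lia|].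
        destruct Rlt_dec; auto. }
      destruct (Rlt_dec (y j * f (x j)) 1) as [Ej|Ej].
      { right. apply filter_In; split; [apply in_seq; lia|].
        destruct Rlt_dec; auto. }
      exfalso. rewrite Hyi in Ei. rewrite Hyj in Ej.
      specialize (Hf (x i) (x j)).
      assert (L * rho (x i) (x j) < 2).
      { apply (Rmult_lt_compat_l L) in Hr; auto.
        replace (L * (2 / L)) with 2 in Hr by (field; lra). auto. }
      assert (f (x i) - f (x j) <= Rabs (f (x i) - f (x j))) by apply Rle_abs.
      lra. }
  assert (Hall : PC n).
  { pose proof (Herr (fun _ => 0)) as H.
    assert (margin_errors n x y (fun _ => 0) = n) as E.
    { unfold margin_errors. rewrite filter_ext_in with (g := fun _ => true).
      - rewrite filter_true. apply length_seq.
      - intros a _. destruct Rlt_dec; auto. lra. }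
    rewrite <- E. apply H. intros a b. unfold Rminus.
    rewrite Rplus_opp_r, Rabs_R0. apply Rmult_le_pos; [lra|apply Hrho]. }
  destruct (min_exists PC n Hall) as [m [[C [[HC1 [HC2 HC3]] HlC]] Hm]].
  exists m. split; [|split; [exists C; split; [split; [|split]|]; assumption|exact Hm]].
  set (Pl := filter (fun i => if Req_EM_T (y i) 1 then
                         if in_dec Nat.eq_dec i C then false else true else false)
                    (seq 0 n)).
  set (f := F rho L x Pl).
  assert (Hf : lipschitz_le rho L f) by (apply F_lip; auto).
  assert (Hle : (margin_errors n x y f <= m)%nat).
  { rewrite <- HlC. unfold margin_errors. apply NoDup_incl_length.
    - apply NoDup_filter, seq_NoDup.
    - intros i Hi. apply filter_In in Hi as [Hi Hlt]. apply in_seq in Hi.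
      destruct (in_dec Nat.eq_dec i C) as [|Hn]; auto. exfalso.
      destruct Rlt_dec as [Hr|]; [|discriminate].
      destruct (Hy i ltac:(lia)) as [E|E].
      + assert (In i Pl).
        { apply filter_In; split; [apply in_seq; lia|].
          destruct Req_EM_T; [|lra]. destruct in_dec; tauto. }
        pose proof (F_ge rho L x Pl i Hrho H). unfold f in Hr. rewrite E in Hr. lra.
      + assert (f (x i) <= -1).
        { apply F_le. intros p Hp. apply filter_In in Hp as [Hp Hc].
          apply in_seq in Hp.
          destruct Req_EM_T as [Ep|]; [|discriminate].
          destruct in_dec as [|Hpn]; [discriminate|].
          destruct (Rlt_dec (rho (x p) (x i)) (2 / L)) as [Hd|Hd].
          - destruct (HC3 p i ltac:(lia) ltac:(lia) (conj Ep (conj E Hd))); tauto.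
          - destruct Hrho as [_ [_ [Hs _]]]. rewrite Hs.
            apply Rnot_lt_le in Hd. apply (Rmult_le_compat_l L) in Hd; [|lra].
            replace (L * (2 / L)) with 2 in Hd by (field; lra). auto. }
        rewrite E in Hr. lra. }
  split.
  - exists f. split; [exact Hf|]. apply Nat.le_antisymm; [exact Hle|]. apply Hm, Herr; exact Hf.
  - intros k [g [Hg <-]]. apply Hm, Herr; auto.
Qed.
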